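(* Let $w \in \mathfrak{S}_n$ and let $i \in \textsf{supp}(w)$ be such that the letter $i$ appears exactly once in every reduced word of $w$. Then deleting the letter $i$ from any reduced word of $w$ yields a word that is still reduced, and all words obtained in this way (from all reduced words of $w$) are reduced words of one and the same permutation $v$.
   Context: $\sigma_i$ ($1\le i\le n-1$) is the simple transposition swapping $i$ and $i+1$; products are compositions of maps. A reduced word of $w$ is a word $i_1\cdots i_\ell$ of minimal length $\ell=\ell(w)$ with $w=\sigma_{i_1}\cdots\sigma_{i_\ell}$; a word is reduced if it is a reduced word of the permutation it represents. $\textsf{supp}(w)$ is the set of letters appearing in (any) reduced word of $w$. *)

(* Defs.v *)
(* Permutations of {1,...,n} are modelled as 'S_n = {perm 'I_n},
   with the point k (1 <= k <= n) represented by the ordinal k-1. *)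
From mathcomp Require Import all_boot all_order all_fingroup.
Set Implicit Arguments.
Unset Strict Implicit.
Unset Printing Implicit Defensive.

(* The simple transposition sigma_i (1 <= i <= n-1) swapping i and i+1,
   i.e. the ordinals i-1 and i.  For letters outside [1, n-1] it is the
   identity, but such letters are excluded from words by [is_word]. *)
Definition simple_transp (n i : nat) : 'S_n :=
  match n return 'S_n with
  | 0 => 1%g
  | m.+1 => if (0 < i) && (i < m.+1)
            then tperm (inord i.-1 : 'I_m.+1) (inord i : 'I_m.+1) else 1%g
  end.

Definition is_word (n : nat) (u : seq nat) : bool :=
  all (fun i => (0 < i) && (i < n)) u.

(* The permutation sigma_{i1} o ... o sigma_{il} (composition of maps).
   MathComp's product is (p * q) x = q (p x), so f o g = g * f. *)
Fixpoint word_perm (n : nat) (u : seq nat) : 'S_n :=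
  match u with
  | [::] => 1%g
  | i :: u' => (word_perm n u' * simple_transp n i)%g
  end.

Definition reduced_word_of (n : nat) (w : 'S_n) (u : seq nat) : Prop :=
  is_word n u /\ word_perm n u = w /\
  forall u' : seq nat, is_word n u' -> word_perm n u' = w -> size u <= size u'.

Definition is_reduced (n : nat) (u : seq nat) : Prop :=
  reduced_word_of (word_perm n u) u.

Definition in_supp (n : nat) (w : 'S_n) (i : nat) : Prop :=
  exists u : seq nat, reduced_word_of w u /\ i \in u.

(* Main.v *)
Require Import Defs.
From mathcomp Require Import all_boot all_order all_fingroup zify.
Set Implicit Arguments.
Unset Strict Implicit.
Unset Printing Implicit Defensive.
Local Open Scope nat_scope.

Lemma stE n j (x : 'I_n) : 0 < j < n ->
  nat_of_ord (simple_transp n j x) =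
  if nat_of_ord x == j.-1 then j else if nat_of_ord x == j then j.-1 else nat_of_ord x.
Proof.
case: n x => [|m] x; first by case: x.
move=> /andP[j0 jn] /=. rewrite j0 jn /=.
case: tpermP => [->|->|h1 h2].
- rewrite !inordK; try lia. by rewrite eqxx.
- rewrite !inordK; try lia. have -> : (j == j.-1) = false by lia. by rewrite eqxx.
- have e1 : nat_of_ord x != j.-1.
    apply/eqP => h; apply: h1; apply/val_inj; rewrite /= inordK //; lia.
  have e2 : nat_of_ord x != j.
    apply/eqP => h; apply: h2; apply/val_inj; rewrite /= inordK //; lia.
  by rewrite (negbTE e1) (negbTE e2).
Qed.

Lemma st_out n j (x : 'I_n) : ~~ (0 < j < n) -> simple_transp n j x = x.
Proof.
case: n x => [|m] x; first by case: x.
move=> h /=. by rewrite (negbTE h) perm1.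
Qed.

Definition invs n (p : 'S_n) :=
  [set xy : 'I_n * 'I_n | (xy.1 < xy.2) && (p xy.2 < p xy.1)].
Definition inv n (p : 'S_n) := #|invs p|.

Lemma inv_st n (p : 'S_n) (a b : 'I_n) : nat_of_ord b = (nat_of_ord a).+1 ->
  inv (simple_transp n b * p)%g =
  if p a < p b then (inv p).+1 else (inv p).-1.
Proof.
move=> hab.
have hj : 0 < nat_of_ord b < n by have := ltn_ord b; lia.
set s := simple_transp n b.
have sE : forall x : 'I_n, nat_of_ord (s x) =
   if nat_of_ord x == nat_of_ord a then nat_of_ord b else if nat_of_ord x == nat_of_ord b then nat_of_ord a else nat_of_ord x.
  by move=> x; rewrite /s stE // hab.
pose f := fun xy : 'I_n * 'I_n => (s xy.1, s xy.2).
have finj : injective f.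
  move=> [x1 y1] [x2 y2] [] /perm_inj -> /perm_inj -> //.
have key : invs (s * p)%g :\ (a, b) = f @^-1: (invs p :\ (a, b)).
  apply/setP => [[x y]]; rewrite !inE /= !permM.
  have -> : ((s x, s y) == (a, b)) = ((x, y) == (b, a)).
    rewrite !xpair_eqE -!val_eqE /= !sE. 
    case: (nat_of_ord x =P nat_of_ord a); case: (nat_of_ord x =P nat_of_ord b); case: (nat_of_ord y =P nat_of_ord a);
      case: (nat_of_ord y =P nat_of_ord b); lia.
  rewrite !xpair_eqE -!val_eqE /= !sE.
  case: (nat_of_ord x =P nat_of_ord a); case: (nat_of_ord x =P nat_of_ord b); case: (nat_of_ord y =P nat_of_ord a);
      case: (nat_of_ord y =P nat_of_ord b); move=> /= *; try lia;
  repeat match goal with |- context [?u == ?v] => 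
    first [ have -> : (u == v) = true by lia | have -> : (u == v) = false by lia ] end;
  rewrite /= ?andbF ?andbT //; 
  repeat match goal with |- context [?u < ?v] => 
    first [ have -> : (u < v) = true by lia | have -> : (u < v) = false by lia ] end;
  by rewrite ?andbF ?andbT ?andFb ?andTb.
have c1 := cardsD1 (a, b) (invs (s * p)%g).
have c2 := cardsD1 (a, b) (invs p).
rewrite key card_preimset // in c1.
rewrite /inv c1 c2 !inE /= !permM.
have sa : s a = b by apply/val_inj => /=; rewrite sE eqxx.
have sb : s b = a.
  apply/val_inj => /=; rewrite sE.
  have -> : (nat_of_ord b == nat_of_ord a) = false by lia.
  by rewrite eqxx.
rewrite sa sb.
have hlt : (nat_of_ord a < nat_of_ord b) by lia.
rewrite hlt /=.
have hne : p a != p b by rewrite (inj_eq perm_inj); apply/eqP => h; move: hab; rewrite h; lia.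
case: ltngtP => h.
- by rewrite /= add0n add1n.
- by rewrite /= add0n.
- by move/val_inj: h hne => ->; rewrite eqxx.
Qed.

Lemma st1 n j : ~~ (0 < j < n) -> simple_transp n j = 1%g.
Proof. case: n => [|m] h //=. by rewrite (negbTE h). Qed.

Lemma st_invol n j : (simple_transp n j * simple_transp n j)%g = 1%g.
Proof.
case: n => [|m] /=; first by rewrite mulg1.
case: ifP => _; [exact: tperm2 | by rewrite mulg1].
Qed.

Lemma word_perm_cat n u v :
  word_perm n (u ++ v) = (word_perm n v * word_perm n u)%g.
Proof.
elim: u => [|x u IH] /=; first by rewrite mulg1.
by rewrite IH mulgA.
Qed.

Lemma word_perm_rcons n u x :
  word_perm n (rcons u x) = (simple_transp n x * word_perm n u)%g.
Proof. by rewrite -cats1 word_perm_cat /= mul1g. Qed.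

Lemma ord_pair n j : 0 < j < n -> exists a b : 'I_n, nat_of_ord a = j.-1 /\ nat_of_ord b = j.
Proof.
move=> h.
have h1 : j.-1 < n by lia.
have h2 : j < n by lia.
by exists (Ordinal h1), (Ordinal h2).
Qed.

Lemma inv_le1 n (p : 'S_n) j : inv (simple_transp n j * p)%g <= (inv p).+1.
Proof.
case h: (0 < j < n); last by rewrite st1 ?h // mul1g.
have [a [b [ha hb]]] := ord_pair h.
have hab : nat_of_ord b = (nat_of_ord a).+1 by lia.
have -> : j = nat_of_ord b by [].
rewrite (inv_st p hab). case: ifP => _ //. lia.
Qed.

Lemma inv_cat n u v : inv (word_perm n (u ++ v)) <= inv (word_perm n u) + size v.
Proof.
elim/last_ind: v => [|v x IH]; first by rewrite cats0 addn0.
rewrite -rcons_cat word_perm_rcons size_rcons.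
apply: leq_trans (inv_le1 _ _) _. by rewrite addnS ltnS.
Qed.

Lemma inv1 n : inv (1%g : 'S_n) = 0.
Proof.
apply/eqP; rewrite cards_eq0; apply/eqP/setP => [[x y]]; rewrite !inE /= !perm1.
by case: ltngtP.
Qed.

Lemma inv_word n u : inv (word_perm n u) <= size u.
Proof. by have := inv_cat n [::] u; rewrite /= inv1. Qed.

Lemma mono_ge n (p : 'S_n) : (forall x y : 'I_n, x < y -> p x < p y) ->
  forall x : 'I_n, x <= p x.
Proof.
move=> hm.
suff H : forall k (x : 'I_n), nat_of_ord x = k -> k <= p x.
  by move=> x; exact: H.
elim=> [//|k IH] x hx.
have hk : k < n by have := ltn_ord x; lia.
have := IH (Ordinal hk) erefl.
have := hm (Ordinal hk) x. rewrite /= hx ltnSn => /(_ isT). lia.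
Qed.

Lemma inv0 n (p : 'S_n) : inv p = 0 -> p = 1%g.
Proof.
move=> h0.
have hm : forall x y : 'I_n, x < y -> p x < p y.
  move=> x y hxy. move/eqP: h0; rewrite cards_eq0 => /eqP/setP/(_ (x, y)).
  rewrite !inE /= hxy /=.
  case: ltngtP => // h _. move/val_inj/perm_inj: h => h. by rewrite h ltnn in hxy.
have hmi : forall x y : 'I_n, x < y -> (p^-1)%g x < (p^-1)%g y.
  move=> x y hxy. case: ltngtP => // h.
  - have := hm _ _ h. rewrite !permKV. lia.
  - move/val_inj: h => /(congr1 p). rewrite !permKV => h. by rewrite h ltnn in hxy.
apply/permP => x. rewrite perm1. apply/val_inj => /=.
have h1 := mono_ge hm x.
have h2 := mono_ge hmi (p x). rewrite permK in h2.
apply/eqP; rewrite eqn_leq; by apply/andP.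
Qed.

Lemma exists_descent n (p : 'S_n) : 0 < inv p ->
  exists a b : 'I_n, nat_of_ord b = (nat_of_ord a).+1 /\ p b < p a.
Proof.
rewrite card_gt0 => /set0Pn [[x y]]; rewrite inE /= => /andP [hxy hp].
suff H : forall d (x y : 'I_n), nat_of_ord y = x + d.+1 -> p y < p x ->
   exists a b : 'I_n, nat_of_ord b = (nat_of_ord a).+1 /\ p b < p a.
  apply: (H (y - x.+1)) hp. lia.
clear x y hxy hp.
elim=> [|d IH] x y hd hp'.
  exists x, y; split => //; lia.
have hk : (x.+1 < n) by have := ltn_ord y; lia.
case: (ltnP (p (Ordinal hk)) (p x)) => h.
- exists x, (Ordinal hk); split => //.
- apply: (IH (Ordinal hk) y) => /=. lia.
  apply: leq_trans hp' h.
Qed.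

Lemma exists_word n (p : 'S_n) :
  exists u, is_word n u /\ word_perm n u = p /\ size u = inv p.
Proof.
move: {2}(inv p) (erefl (inv p)) => k.
elim: k p => [|k IH] p hk.
  exists [::]; split => //; split => //. by rewrite (inv0 hk).
have [a [b [hab hd]]] := exists_descent (ltac:(rewrite hk; done) : 0 < inv p).
have hi := inv_st p hab.
rewrite ltnNge (ltnW hd) /= hk /= in hi.
have [u [hw [hu hs]]] := IH _ hi.
exists (rcons u b); split; last split.
- rewrite /is_word all_rcons.
  have hb : (0 < b < n) = true by apply/andP; split; [rewrite hab | exact: ltn_ord].
  by rewrite hb; exact: hw.
- by rewrite word_perm_rcons hu mulgA st_invol mul1g.
- by rewrite size_rcons hs hi hk.
Qed.

Lemma red_iff n (w : 'S_n) u :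
  reduced_word_of w u <-> [/\ is_word n u, word_perm n u = w & size u = inv w].
Proof.
split.
- move=> [hw [hp hm]]. split => //.
  have [r [rw [rp rs]]] := exists_word w.
  have := hm r rw rp. have := inv_word n u. rewrite hp rs. lia.
- move=> [hw hp hs]; split => //; split => // u' hw' hp'.
  rewrite hs -hp'. exact: inv_word.
Qed.

Lemma st_inv n j (x : 'I_n) : simple_transp n j (simple_transp n j x) = x.
Proof. by rewrite -permM st_invol perm1. Qed.

Lemma swapE n (a b : 'I_n) : nat_of_ord b = (nat_of_ord a).+1 -> forall y,
  simple_transp n b y = if y == a then b else if y == b then a else y.
Proof.
move=> hab y.
have hj : 0 < b < n by rewrite hab ltn0Sn -hab ltn_ord.
apply/val_inj => /=. rewrite stE // -!val_eqE /= hab /=.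
case: ifP => _; first by []. case: ifP => //.
Qed.

Lemma st_pres n i j (x : 'I_n) : j != i -> (simple_transp n j x < i) = (x < i).
Proof.
move=> hji.
case h: (0 < j < n); last by rewrite st1 ?h // perm1.
rewrite stE //. case/andP: h => h1 h2.
case: ifP => /eqP e1; last case: ifP => /eqP e2; lia.
Qed.

Lemma wp_pres n i u (x : 'I_n) : i \notin u -> (word_perm n u x < i) = (x < i).
Proof.
elim: u x => [|j u IH] x /=; first by rewrite perm1.
rewrite in_cons negb_or => /andP [hij hu].
by rewrite permM st_pres 1?eq_sym // IH.
Qed.

Lemma contains_i n i (p : 'S_n) (y : 'I_n) r :
  (p y < i) != (y < i) -> word_perm n r = p -> i \in r.
Proof.
move=> hy hr. apply/negPn/negP => hn.
by rewrite -hr wp_pres // eqxx in hy.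
Qed.

Definition cross n i (p : 'S_n) (x0 x1 : 'I_n) :=
  [/\ x0 < i, i <= p x0, i <= x1, p x1 < i &
      forall x : 'I_n, x != x0 -> x != x1 -> (p x < i) = (x < i)].

Lemma cross_uniq n i (p : 'S_n) x0 x1 y0 y1 :
  cross i p x0 x1 -> cross i p y0 y1 -> x0 = y0 /\ x1 = y1.
Proof.
move=> [h1 h2 h3 h4 h5] [g1 g2 g3 g4 g5].
split.
- apply/eqP; apply/negP => /negP hne.
  have hne' : x0 != y1 by apply/eqP => e; move: h1 g3; rewrite e; lia.
  have := g5 x0 hne hne'. rewrite h1. lia.
- apply/eqP; apply/negP => /negP hne.
  have hne' : x1 != y0 by apply/eqP => e; move: h3 g1; rewrite e; lia.
  have := g5 x1 hne' hne. rewrite h4. lia.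
Qed.

Lemma cross_swap n i (p : 'S_n) x0 x1 j : j != i -> cross i p x0 x1 ->
  cross i (simple_transp n j * p)%g (simple_transp n j x0) (simple_transp n j x1).
Proof.
move=> hj [h1 h2 h3 h4 h5].
split; rewrite ?permM ?st_inv ?st_pres //; try lia.
- by rewrite leqNgt st_pres // -leqNgt.
- move=> x e0 e1. rewrite permM -(st_pres x hj) h5 ?st_pres //.
  + by apply: contra e0 => /eqP <-; rewrite st_inv.
  + by apply: contra e1 => /eqP <-; rewrite st_inv.
Qed.

Lemma decomp n i a b : 0 < i < n -> i \notin a -> i \notin b ->
  exists x0 x1, cross i (word_perm n (a ++ i :: b)) x0 x1 /\
    forall x, word_perm n (a ++ b) x = word_perm n (a ++ i :: b) (tperm x0 x1 x).
Proof.
move=> hi ha hb.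
have [c [d [hc hd]]] := ord_pair hi.
have hcd : nat_of_ord d = (nat_of_ord c).+1 by lia.
have sE := swapE hcd.
set A := word_perm n a. set B := word_perm n b.
have wE : forall x, word_perm n (a ++ i :: b) x = A (simple_transp n i (B x)).
  by move=> x; rewrite word_perm_cat /= !permM.
have vE : forall x, word_perm n (a ++ b) x = A (B x).
  by move=> x; rewrite word_perm_cat !permM.
have hdi : i = nat_of_ord d by [].
exists ((B^-1)%g c), ((B^-1)%g d); split.
- split.
  + by rewrite -(wp_pres _ hb) -/B permKV hc; lia.
  + rewrite wE permKV hdi sE eqxx.
    have := wp_pres (simple_transp n d c) ha. rewrite -/A sE eqxx. lia.
  + by rewrite leqNgt -(wp_pres _ hb) -/B permKV hd ltnn.
  + rewrite wE permKV hdi sE eqxx.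
    have -> : (d == c) = false by apply/negbTE; rewrite -val_eqE /=; lia.
    by rewrite -hdi (wp_pres _ ha) hc; lia.
  + move=> x e0 e1. rewrite wE hdi sE.
    have -> : (B x == c) = false.
      apply/negbTE; apply: contra e0 => /eqP <-; by rewrite permK.
    have -> : (B x == d) = false.
      apply/negbTE; apply: contra e1 => /eqP <-; by rewrite permK.
    by rewrite -hdi (wp_pres _ ha) (wp_pres _ hb).
- move=> x. rewrite vE wE hdi.
  case: tpermP => [->|->|e0 e1]; rewrite ?permKV ?sE ?eqxx //.
  + have -> : (d == c) = false by apply/negbTE; rewrite -val_eqE /=; lia.
    by [].
  + have -> : (B x == c) = false.
      by apply/negbTE/eqP => e; apply: e0; rewrite -e permK.
    have -> : (B x == d) = false.
      by apply/negbTE/eqP => e; apply: e1; rewrite -e permK.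
    by [].
Qed.

Lemma swap_a n (a b : 'I_n) : nat_of_ord b = (nat_of_ord a).+1 -> simple_transp n b a = b.
Proof. by move=> h; rewrite (swapE h) eqxx. Qed.

Lemma swap_b n (a b : 'I_n) : nat_of_ord b = (nat_of_ord a).+1 -> simple_transp n b b = a.
Proof.
move=> h; rewrite (swapE h) eqxx.
have -> : (b == a) = false by apply/negbTE; rewrite -val_eqE /=; lia.
by [].
Qed.

Lemma swap_o n (a b y : 'I_n) : nat_of_ord b = (nat_of_ord a).+1 ->
  nat_of_ord y != a -> nat_of_ord y != b -> simple_transp n b y = y.
Proof.
move=> h h1 h2; rewrite (swapE h).
by rewrite -val_eqE (negbTE h1) -val_eqE (negbTE h2).
Qed.

Lemma red_rcons n (p : 'S_n) (a b : 'I_n) r :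
  nat_of_ord b = (nat_of_ord a).+1 -> p b < p a ->
  reduced_word_of (simple_transp n b * p)%g r -> reduced_word_of p (rcons r b).
Proof.
move=> hab hd /red_iff [hw hp hs]. apply/red_iff.
have hi := inv_st (simple_transp n b * p)%g hab.
rewrite !permM (swap_a hab) (swap_b hab) hd mulgA st_invol mul1g in hi.
split.
- rewrite /is_word all_rcons.
  have hb : (0 < b < n) = true by rewrite hab ltn0Sn -hab ltn_ord.
  by rewrite hb; exact: hw.
- by rewrite word_perm_rcons hp mulgA st_invol mul1g.
- by rewrite size_rcons hs hi.
Qed.

Definition good n i (p : 'S_n) := exists r, reduced_word_of p r /\ 1 < count_mem i r.

Lemma good_step n i (p : 'S_n) (a b : 'I_n) :
  nat_of_ord b = (nat_of_ord a).+1 -> p b < p a -> 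
  good i (simple_transp n b * p)%g -> good i p.
Proof.
move=> hab hd [r [hr hc]]. exists (rcons r b); split.
- exact: red_rcons hab hd hr.
- rewrite -cats1 count_cat. lia.
Qed.

Lemma good_term n i (p : 'S_n) (c d y : 'I_n) :
  nat_of_ord c = i.-1 -> nat_of_ord d = i -> 0 < i ->
  p d < p c -> nat_of_ord y != c -> nat_of_ord y != d -> (p y < i) != (y < i) ->
  good i p.
Proof.
move=> hc hd hi0 hlt hyc hyd hy.
have hcd : nat_of_ord d = (nat_of_ord c).+1 by lia.
have [r [rw [rp rs]]] := exists_word (simple_transp n d * p)%g.
have hin : i \in r.
  apply: (contains_i (y := y)) rp. by rewrite permM (swap_o hcd).
exists (rcons r d); split.
- apply: red_rcons hlt _ => //. exact/red_iff.
- have hcnt : 0 < count_mem i r by rewrite -has_count has_pred1.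
  rewrite -cats1 count_cat /= hd eqxx /= addn0 addn1 ltnS. exact: hcnt.
Qed.

Lemma ord_neq n (x y : 'I_n) : nat_of_ord x <> nat_of_ord y -> x != y.
Proof. by move=> h; apply/eqP => e; apply: h; rewrite e. Qed.

Lemma swap_o' n (a b y : 'I_n) : nat_of_ord b = (nat_of_ord a).+1 ->
  nat_of_ord y <> a -> nat_of_ord y <> b -> simple_transp n b y = y.
Proof. by move=> h /eqP h1 /eqP h2; rewrite (swap_o h). Qed.

Lemma neqP' (x y : nat) : x <> y -> x != y.
Proof. by move/eqP. Qed.

Ltac fin := repeat match goal with
  | |- is_true (_ < _ < _) => apply/andP; split
  | |- context[if ?b then _ else _] => case: ifP => ?
  end; lia.

Lemma witness n i (c d : 'I_n) : nat_of_ord c = i.-1 -> nat_of_ord d = i -> 0 < i ->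
  forall m (p : 'S_n) (x0 x1 q : 'I_n), cross i p x0 x1 -> x0 < q < x1 ->
  p x1 < p q < p x0 ->
  (if q < i then (i.-1 - q) + (x1 - i) else (q - i) + (i.-1 - x0)) = m -> good i p.
Proof.
move=> hc hd hi0 m; elim/ltn_ind: m => m IH p x0 x1 q hcr.
have [h1 h2 h3 h4 h5] := hcr.
move=> /andP[hq0 hq1] /andP[hv1 hv2] hm.
have hcd : nat_of_ord d = (nat_of_ord c).+1 by lia.
have hin : i < n by rewrite -hd ltn_ord.
case: (ltnP q i) => hqi; rewrite ?hqi ?(leq_gtF hqi) in hm.
-
  case: (ltnP q.+1 i) => hq'.
  + have hq'n : q.+1 < n by lia.
    pose q' := Ordinal hq'n.
    have hpq' : p q' < i.
      rewrite h5 //= ; apply: ord_neq => /=; lia.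
    have hne : p q' != p x1 by rewrite (inj_eq perm_inj); apply: ord_neq => /=; lia.
    case: (ltnP (p x1) (p q')) => hcmp.
    * apply: (IH _ _ p x0 x1 q' hcr _ _ erefl); rewrite /= ?permM; fin.
    * have hab : nat_of_ord q' = (nat_of_ord q).+1 by [].
      have hlt : p q' < p x1.
        rewrite ltn_neqAle hcmp andbT. by rewrite val_eqE.
      apply: (good_step hab); first lia.
      have hs0 : simple_transp n q' x0 = x0 by apply: (swap_o' hab) => /=; lia.
      have hs1 : simple_transp n q' x1 = x1 by apply: (swap_o' hab) => /=; lia.
      have hcr' := cross_swap (neqP' (ltac:(simpl; lia) : nat_of_ord q' <> i)) hcr.
      rewrite hs0 hs1 in hcr'.
      apply: (IH _ _ _ x0 x1 q' hcr' _ _ erefl); rewrite /= ?permM  ?hs0 ?hs1 ?(swap_b hab); fin.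
  +
    have hqc : q = c by apply/val_inj => /=; lia.
    case: (eqVneq (nat_of_ord x1) i) => hx1.
    * have hx1d : x1 = d by apply/val_inj => /=; lia.
      apply: (good_term (y := x0) hc hd hi0).
      - by rewrite -hx1d -hqc.
      - apply/eqP; lia.
      - apply/eqP; lia.
      - rewrite h1. by rewrite ltnNge h2.
    * have hzn : x1.-1 < n by have := ltn_ord x1; lia.
      pose z := Ordinal hzn.
      have hab : nat_of_ord x1 = (nat_of_ord z).+1 by rewrite /= ; lia.
      have hpz : i <= p z.
        rewrite leqNgt h5 /=; first lia.
        - apply: ord_neq => /=; lia.
        - apply: ord_neq => /=; lia.
      apply: (good_step hab); first lia.
      have hs0 : simple_transp n x1 x0 = x0 by apply: (swap_o' hab) => /=; lia.
      have hsq : simple_transp n x1 q = q by apply: (swap_o' hab) => /=; lia.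
      have hcr' := cross_swap hx1 hcr.
      rewrite hs0 (swap_b hab) in hcr'.
      apply: (IH _ _ _ x0 z q hcr' _ _ erefl); rewrite /= ?permM  ?hs0 ?hsq ?(swap_a hab); fin.
-
  case: (ltnP i q) => hq'.
  + have hq'n : q.-1 < n by have := ltn_ord q; lia.
    pose q' := Ordinal hq'n.
    have hab : nat_of_ord q = (nat_of_ord q').+1 by rewrite /=; lia.
    have hpq' : i <= p q'.
      rewrite leqNgt h5 /=; first lia.
      - apply: ord_neq => /=; lia.
      - apply: ord_neq => /=; lia.
    have hne : p q' != p x0 by rewrite (inj_eq perm_inj); apply: ord_neq => /=; lia.
    case: (ltnP (p q') (p x0)) => hcmp.
    * apply: (IH _ _ p x0 x1 q' hcr _ _ erefl); rewrite /= ?permM; fin.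
    * have hlt : p x0 < p q'.
        rewrite ltn_neqAle hcmp andbT eq_sym. by rewrite val_eqE.
      apply: (good_step hab); first lia.
      have hs0 : simple_transp n q x0 = x0 by apply: (swap_o' hab) => /=; lia.
      have hs1 : simple_transp n q x1 = x1 by apply: (swap_o' hab) => /=; lia.
      have hcr' := cross_swap (neqP' (ltac:(lia) : nat_of_ord q <> i)) hcr.
      rewrite hs0 hs1 in hcr'.
      apply: (IH _ _ _ x0 x1 q' hcr' _ _ erefl); rewrite /= ?permM  ?hs0 ?hs1 ?(swap_a hab); fin.
  +
    have hqd : q = d by apply/val_inj => /=; lia.
    case: (eqVneq (nat_of_ord x0) i.-1) => hx0.
    * have hx0c : x0 = c by apply/val_inj => /=; lia.
      apply: (good_term (y := x1) hc hd hi0).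
      - by rewrite -hx0c -hqd.
      - apply/eqP; lia.
      - apply/eqP; lia.
      - by rewrite h4 ltnNge h3.
    * have hzn : x0.+1 < n by lia.
      pose z := Ordinal hzn.
      have hab : nat_of_ord z = (nat_of_ord x0).+1 by [].
      have hpz : p z < i.
        rewrite h5 /=; first lia.
        - apply: ord_neq => /=; lia.
        - apply: ord_neq => /=; lia.
      apply: (good_step hab); first lia.
      have hs1 : simple_transp n z x1 = x1 by apply: (swap_o' hab) => /=; lia.
      have hsq : simple_transp n z q = q by apply: (swap_o' hab) => /=; lia.
      have hcr' := cross_swap (neqP' (ltac:(simpl; lia) : nat_of_ord z <> i)) hcr.
      rewrite hs1 (swap_a hab) in hcr'.
      apply: (IH _ _ _ z x1 q hcr' _ _ erefl); rewrite /= ?permM  ?hs1 ?hsq ?(swap_b hab); fin.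
Qed.

Lemma split_once (i : nat) u : count_mem i u = 1 ->
  exists a b, [/\ u = a ++ i :: b, i \notin a & i \notin b].
Proof.
move=> hc.
have hin : i \in u by rewrite -has_pred1 has_count hc.
case/splitPr: hin hc => a b.
rewrite count_cat /= eqxx => hc.
have hc1 : count_mem i a + (count_mem i b).+1 = 1 by rewrite -hc.
exists a, b; split => //; apply/count_memPn; lia.
Qed.

Lemma rem_once (i : nat) a b : i \notin a -> rem i (a ++ i :: b) = a ++ b.
Proof.
elim: a => [|x a IH] /=; first by rewrite eqxx.
rewrite in_cons negb_or eq_sym => /andP [hx ha].
by rewrite (negbTE hx) IH.
Qed.

Lemma prefix_tight n (w : 'S_n) u v : reduced_word_of w (u ++ v) ->
  inv (word_perm n u) = size u.
Proof.
move=> /red_iff [hw hp hs].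
have := inv_cat n u v. rewrite hp -hs size_cat.
have := inv_word n u. lia.
Qed.

Lemma first_fail (P : nat -> bool) m : P 0 -> ~~ P m ->
  exists k, [/\ k < m, P k & ~~ P k.+1].
Proof.
elim: m => [|m IH] h0 hm; first by rewrite h0 in hm.
case hPm: (P m).
- by exists m; split.
- have [k [hk1 hk2 hk3]] := IH h0 (negbT hPm).
  by exists k; split => //; lia.
Qed.

Lemma is_word_cat n u v : is_word n (u ++ v) = is_word n u && is_word n v.
Proof. by rewrite /is_word all_cat. Qed.


Lemma case_an n i (c d : 'I_n) (w2 : 'S_n) x0 x1 (ay by' : 'I_n) :
  nat_of_ord c = i.-1 -> nat_of_ord d = i -> 0 < i ->
  nat_of_ord by' = (nat_of_ord ay).+1 -> nat_of_ord by' != i -> cross i w2 x0 x1 ->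
  w2 (tperm x0 x1 by') < w2 (tperm x0 x1 ay) -> w2 ay < w2 by' ->
  good i (simple_transp n by' * w2)%g.
Proof.
move=> hc hd hi0 hab hyi' hcr hs1 hs2.
set w1 := (simple_transp n by' * w2)%g.
have [h1 h2 h3 h4 h5] := hcr.
have hw1 : forall x, w1 x = w2 (simple_transp n by' x) by move=> x; rewrite permM.
  have hcr' := cross_swap hyi' hcr.
  rewrite -/w1 in hcr'.
  case: (eqVneq ay x0) => e0.
  - exfalso. subst ay.
    have hb5 : w2 by' < i.
      rewrite h5; first lia.
      + apply: ord_neq; lia.
      + apply: ord_neq; lia.
    lia.
  case: (eqVneq ay x1) => e1.
  - subst ay.
    have hb5 : i <= w2 by'.
      rewrite leqNgt h5; first lia.
      + apply: ord_neq; lia.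
      + apply: ord_neq; lia.
    have ht1 : tperm x0 x1 by' = by'.
      apply: tpermD; apply: ord_neq; lia.
    rewrite ht1 tpermR in hs1.
    rewrite (swap_o' (y := x0) hab) in hcr'; try lia.
    rewrite (swap_a hab) in hcr'.
    apply: (@witness n i c d hc hd hi0 _ w1 _ _ x1 hcr' _ _ erefl).
    + apply/andP; split; lia.
    + rewrite !hw1 (swap_b hab) (swap_a hab) (swap_o' hab); [apply/andP; split; lia|lia|lia].
  case: (eqVneq by' x0) => e2.
  - subst by'.
    have ha5 : w2 ay < i.
      rewrite h5; first lia.
      + exact: e0.
      + exact: e1.
    have ht1 : tperm x0 x1 ay = ay by apply: tpermD; rewrite eq_sym.
    rewrite ht1 tpermL in hs1.
    rewrite (swap_o' (y := x1) hab) in hcr'; try lia.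
    rewrite (swap_b hab) in hcr'.
    apply: (@witness n i c d hc hd hi0 _ w1 _ _ x0 hcr' _ _ erefl).
    + apply/andP; split; lia.
    + rewrite !hw1 (swap_b hab) (swap_a hab) (swap_o' hab); [apply/andP; split; lia|lia|lia].
  case: (eqVneq by' x1) => e3.
  - exfalso. subst by'.
    have ha5 : i <= w2 ay.
      rewrite leqNgt h5 //. lia.
    lia.
  - exfalso.
    rewrite !tpermD in hs1; try by rewrite eq_sym.
    lia.
Qed.

Lemma del_red n (w : 'S_n) (i : nat) a b :
  (forall u, reduced_word_of w u -> count_mem i u = 1) ->
  reduced_word_of w (a ++ i :: b) -> i \notin a -> i \notin b ->
  inv (word_perm n (a ++ b)) = size (a ++ b).
Proof.
move=> H hu ha hb.
have hu' := hu. move/red_iff: hu' => [huw hup hus].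
have hi : 0 < i < n.
  by move: huw; rewrite is_word_cat => /andP [_ /andP [-> _]].
have [c [d [hc hd]]] := ord_pair hi.
have hi0 : 0 < i by case/andP: hi.
apply/eqP; apply/negPn/negP => hne.
pose P k := inv (word_perm n (a ++ take k b)) == size a + k.
have P0 : P 0 by rewrite /P take0 cats0 addn0 (prefix_tight hu).
have Pm : ~~ P (size b) by rewrite /P take_size -size_cat.
have [k [hk Pk Pk1]] := first_fail P0 Pm.
set y := nth 0 b k.
set b1 := take k b. set b2 := drop k.+1 b.
have hbE : b = b1 ++ y :: b2 by rewrite /b1 /y /b2 -drop_nth // cat_take_drop.
have hyb : y \in b by rewrite mem_nth.
have hyi : y != i by apply: contraNneq hb => <-.
have hb1 : i \notin b1 by apply: contra hb; rewrite hbE mem_cat => ->.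
have hb2 : i \notin b2 by apply: contra hb; rewrite hbE mem_cat in_cons => ->; rewrite !orbT.
have hyw : 0 < y < n.
  move: huw; rewrite is_word_cat => /andP [_ /andP [_ hbw]].
  by move/allP: hbw => /(_ y hyb).
have [ay [by' [hay hby]]] := ord_pair hyw.
have hab : nat_of_ord by' = (nat_of_ord ay).+1 by lia.
have hyE : y = nat_of_ord by' by [].
set sig := word_perm n (a ++ b1).
have hsig : inv sig = size a + k by apply/eqP.
have hsig' : inv (simple_transp n by' * sig)%g != size a + k.+1.
  move: Pk1; rewrite /P (take_nth 0) ?hk // -/b1 -/y -rcons_cat word_perm_rcons hyE.
  by [].
have hs1 : sig by' < sig ay.
  have := inv_st sig hab. case: ifP => h.
  - by rewrite hsig => e; rewrite e addnS eqxx in hsig'.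
  - move=> _. rewrite ltn_neqAle leqNgt h andbT.
    rewrite val_eqE (inj_eq perm_inj). apply: ord_neq; lia.
set pre := a ++ i :: b1.
have huE : a ++ i :: b = (rcons pre y) ++ b2 by rewrite hbE /pre -cats1 -!catA.
have hu2 : reduced_word_of w (pre ++ (y :: b2)) by rewrite /pre -catA /=; rewrite -hbE.
have t1 := prefix_tight hu2.
have hu3 : reduced_word_of w (rcons pre y ++ b2) by rewrite -huE.
have t2 := prefix_tight hu3.
rewrite word_perm_rcons size_rcons -t1 hyE in t2.
set w2 := word_perm n pre in t1 t2.
have hs2 : w2 ay < w2 by'.
  have := inv_st w2 hab. rewrite t2. case: ifP => // _ e. lia.
have [x0 [x1 [hcr hsE]]] := decomp hi ha hb1.
rewrite -/pre -/w2 -/sig in hcr hsE.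
have [h1 h2 h3 h4 h5] := hcr.
set w1 := (simple_transp n by' * w2)%g.
have hgood : good i w1.
  rewrite /w1; apply: (case_an hc hd hi0 hab _ hcr) => //.
  - by rewrite -hyE.
  - by rewrite -!hsE.
have [r [hr hcnt]] := hgood.
have hfin : reduced_word_of w (r ++ b2).
  move/red_iff: hr => [rw rp rs].
  apply/red_iff; split.
  - rewrite is_word_cat rw /=. move: huw; rewrite huE is_word_cat => /andP [_ ->]. by [].
  - by rewrite word_perm_cat rp -hup huE word_perm_cat word_perm_rcons /w1 /w2 hyE.
  - by rewrite size_cat rs -hus huE size_cat size_rcons -t1 /w1 t2.
have := H _ hfin. rewrite count_cat. lia.
Qed.

Lemma range_i n (i : nat) a b : is_word n (a ++ i :: b) -> 0 < i < n.
Proof. by rewrite is_word_cat => /andP [_ /andP [-> _]]. Qed.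

Theorem corollary2p5 (n : nat) (w : 'S_n) (i : nat) :
  in_supp w i ->
  (forall u : seq nat, reduced_word_of w u -> count_mem i u = 1) ->
  (forall u : seq nat, reduced_word_of w u -> is_reduced n (rem i u)) /\
  (exists v : 'S_n, forall u : seq nat, reduced_word_of w u ->
      reduced_word_of v (rem i u)).
Proof.
move=> [u0 [hu0 hin0]] H.
have red_rem : forall u, reduced_word_of w u -> is_reduced n (rem i u).
  move=> u hu. have [a [b [eu ha hb]]] := split_once (H u hu).
  rewrite eu rem_once //. apply/red_iff; split => //.
  - have := hu; move/red_iff => [hw _ _]. move: hw; rewrite eu !is_word_cat /=.
    by case/andP => -> /andP [_ ->].
  - rewrite eu in hu. by rewrite (del_red H hu ha hb).
split => //.
have [a0 [b0 [e0 ha0 hb0]]] := split_once (H _ hu0).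
exists (word_perm n (a0 ++ b0)).
move=> u hu.
have hr := red_rem u hu.
have [a [b [eu ha hb]]] := split_once (H u hu).
suff -> : word_perm n (a0 ++ b0) = word_perm n (rem i u) by [].
rewrite eu rem_once //.
have hu' := hu. move/red_iff: hu' => [hw hp _].
rewrite eu in hw hp.
have hi := range_i hw.
have hu0' := hu0. move/red_iff: hu0' => [_ hp0 _].
rewrite e0 in hp0.
have [x0 [x1 [c1 E1]]] := decomp hi ha hb.
have [y0 [y1 [c2 E2]]] := decomp hi ha0 hb0.
rewrite hp in c1 E1. rewrite hp0 in c2 E2.
have [e1 e2] := cross_uniq c2 c1.
by apply/permP => x; rewrite E1 E2 e1 e2.
Qed.
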